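(* Let $D\subseteq\mathbb{R}^3\setminus\{0\}$ be open and $\vec\mu:D\to\mathbb{R}^3$ smooth (depending only on $\vec\gamma$), regarded as a function on $\mathbb{R}^3\times D$. Then $\Pi_{\vec\mu}$ defines a Poisson bracket if and only if $\vec\gamma\cdot\operatorname{curl}_{\vec\gamma}\vec\mu=0$ on $D$, which is equivalent to $\operatorname{div}_{\vec\gamma}(\vec\gamma\times\vec\mu(\vec\gamma))=0$ on $D$.
   Context: Coordinates on $\mathbb{R}^6$ are $(\vec M,\vec\gamma)=(M_1,M_2,M_3,\gamma_1,\gamma_2,\gamma_3)$. For a smooth $\vec\mu=(\mu_1,\mu_2,\mu_3)$ of $(\vec M,\vec\gamma)$, $\Pi_{\vec\mu}$ is the skew-symmetric $6\times6$ matrix $$\Pi_{\vec\mu}=\begin{bmatrix}0&-M_3-\mu_3&M_2+\mu_2&0&-\gamma_3&\gamma_2\\ M_3+\mu_3&0&-M_1-\mu_1&\gamma_3&0&-\gamma_1\\ -M_2-\mu_2&M_1+\mu_1&0&-\gamma_2&\gamma_1&0\\ 0&-\gamma_3&\gamma_2&0&0&0\\ \gamma_3&0&-\gamma_1&0&0&0\\ -\gamma_2&\gamma_1&0&0&0&0\end{bmatrix},$$ and it ''defines a Poisson bracket'' if $\{f,g\}_{\vec\mu}=(\nabla f)^T\Pi_{\vec\mu}\nabla g$ satisfies the Jacobi identity. *)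

(* Defs.v *)
From Stdlib Require Import Reals Lra List ClassicalEpsilon.
Open Scope R_scope.

(** Points of R^3, and of R^6 = R^3_M x R^3_gamma as pairs (M, gamma).
    Coordinates are 0-indexed internally: index 0,1,2 of a V3 are
    components 1,2,3; indices 0..5 of a V6 are M1,M2,M3,g1,g2,g3. *)
Record V3 := mkV3 { c1 : R; c2 : R; c3 : R }.
Definition V6 : Type := (V3 * V3)%type.

Definition get3 (v : V3) (i : nat) : R :=
  match i with 0 => c1 v | 1 => c2 v | _ => c3 v end.
Definition upd3 (v : V3) (i : nat) (t : R) : V3 :=
  match i with
  | 0 => mkV3 t (c2 v) (c3 v)
  | 1 => mkV3 (c1 v) t (c3 v)
  | _ => mkV3 (c1 v) (c2 v) t
  end.

Definition get6 (p : V6) (i : nat) : R :=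
  match i with
  | 0 | 1 | 2 => get3 (fst p) i
  | S (S (S j)) => get3 (snd p) j
  end.
Definition upd6 (p : V6) (i : nat) (t : R) : V6 :=
  match i with
  | 0 | 1 | 2 => (upd3 (fst p) i t, snd p)
  | S (S (S j)) => (fst p, upd3 (snd p) j t)
  end.

Definition pd3 (i : nat) (F : V3 -> R) (v : V3) : R :=
  epsilon (inhabits 0) (fun l => derivable_pt_lim (fun t => F (upd3 v i t)) (get3 v i) l).
Definition pd6 (i : nat) (F : V6 -> R) (p : V6) : R :=
  epsilon (inhabits 0) (fun l => derivable_pt_lim (fun t => F (upd6 p i t)) (get6 p i) l).

Definition iter_pd3 (l : list nat) (F : V3 -> R) : V3 -> R :=
  fold_right (fun i G => pd3 i G) F l.
Definition iter_pd6 (l : list nat) (F : V6 -> R) : V6 -> R :=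
  fold_right (fun i G => pd6 i G) F l.

Definition dist3 (u v : V3) : R :=
  Rabs (c1 u - c1 v) + Rabs (c2 u - c2 v) + Rabs (c3 u - c3 v).
Definition dist6 (p q : V6) : R := dist3 (fst p) (fst q) + dist3 (snd p) (snd q).

Definition open3 (D : V3 -> Prop) : Prop :=
  forall v, D v -> exists r, 0 < r /\ forall w, dist3 w v < r -> D w.

Definition cont3_at (F : V3 -> R) (v : V3) : Prop :=
  forall eps, 0 < eps -> exists delta, 0 < delta /\
    forall w, dist3 w v < delta -> Rabs (F w - F v) < eps.
Definition cont6_at (F : V6 -> R) (p : V6) : Prop :=
  forall eps, 0 < eps -> exists delta, 0 < delta /\
    forall q, dist6 q p < delta -> Rabs (F q - F p) < eps.

Definition smooth3_on (D : V3 -> Prop) (F : V3 -> R) : Prop :=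
  forall (l : list nat) v, D v ->
    cont3_at (iter_pd3 l F) v /\
    forall i, (i < 3)%nat -> exists d,
      derivable_pt_lim (fun t => iter_pd3 l F (upd3 v i t)) (get3 v i) d.
Definition smooth6_on (U : V6 -> Prop) (F : V6 -> R) : Prop :=
  forall (l : list nat) p, U p ->
    cont6_at (iter_pd6 l F) p /\
    forall i, (i < 6)%nat -> exists d,
      derivable_pt_lim (fun t => iter_pd6 l F (upd6 p i t)) (get6 p i) d.

Definition smoothV3_on (D : V3 -> Prop) (mu : V3 -> V3) : Prop :=
  smooth3_on D (fun g => c1 (mu g)) /\ smooth3_on D (fun g => c2 (mu g)) /\
  smooth3_on D (fun g => c3 (mu g)).

Definition Pi (mu : V3 -> V3) (p : V6) (i j : nat) : R :=
  let M := fst p in let g := snd p in let m := mu g in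
  let a1 := c1 M + c1 m in let a2 := c2 M + c2 m in let a3 := c3 M + c3 m in
  match i, j with
  | 0, 1 => - a3 | 0, 2 => a2 | 0, 4 => - c3 g | 0, 5 => c2 g
  | 1, 0 => a3 | 1, 2 => - a1 | 1, 3 => c3 g | 1, 5 => - c1 g
  | 2, 0 => - a2 | 2, 1 => a1 | 2, 3 => - c2 g | 2, 4 => c1 g
  | 3, 1 => - c3 g | 3, 2 => c2 g
  | 4, 0 => c3 g | 4, 2 => - c1 g
  | 5, 0 => - c2 g | 5, 1 => c1 g
  | _, _ => 0
  end.

Definition bracket (mu : V3 -> V3) (f g : V6 -> R) : V6 -> R :=
  fun p => sum_f_R0 (fun i => sum_f_R0 (fun j =>
             pd6 i f p * Pi mu p i j * pd6 j g p) 5) 5.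

Definition defines_Poisson (mu : V3 -> V3) (U : V6 -> Prop) : Prop :=
  forall f g h : V6 -> R,
    smooth6_on U f -> smooth6_on U g -> smooth6_on U h ->
    forall p, U p ->
      bracket mu f (bracket mu g h) p + bracket mu g (bracket mu h f) p
      + bracket mu h (bracket mu f g) p = 0.

Definition dot3 (u v : V3) : R := c1 u * c1 v + c2 u * c2 v + c3 u * c3 v.
Definition cross3 (u v : V3) : V3 :=
  mkV3 (c2 u * c3 v - c3 u * c2 v) (c3 u * c1 v - c1 u * c3 v) (c1 u * c2 v - c2 u * c1 v).

Definition curl3 (w : V3 -> V3) (g : V3) : V3 :=
  mkV3 (pd3 1 (fun x => c3 (w x)) g - pd3 2 (fun x => c2 (w x)) g)
       (pd3 2 (fun x => c1 (w x)) g - pd3 0 (fun x => c3 (w x)) g)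
       (pd3 0 (fun x => c2 (w x)) g - pd3 1 (fun x => c1 (w x)) g).
Definition div3 (w : V3 -> V3) (g : V3) : R :=
  pd3 0 (fun x => c1 (w x)) g + pd3 1 (fun x => c2 (w x)) g + pd3 2 (fun x => c3 (w x)) g.

(* Main.v *)
Require Import Defs.
From Stdlib Require Import Reals Lra Lia List ClassicalEpsilon FunctionalExtensionality.
Require Import Defs.
Open Scope R_scope.

Lemma pd6_eq i F p l :
  derivable_pt_lim (fun t => F (upd6 p i t)) (get6 p i) l -> pd6 i F p = l.
Proof.
  intro H. unfold pd6.
  apply (uniqueness_limite (fun t => F (upd6 p i t)) (get6 p i)); [|exact H].
  apply epsilon_spec. exists l; exact H.
Qed.

Lemma pd3_eq i F p l :
  derivable_pt_lim (fun t => F (upd3 p i t)) (get3 p i) l -> pd3 i F p = l.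
Proof.
  intro H. unfold pd3.
  apply (uniqueness_limite (fun t => F (upd3 p i t)) (get3 p i)); [|exact H].
  apply epsilon_spec. exists l; exact H.
Qed.

Lemma pd6_spec i F p :
  (exists l, derivable_pt_lim (fun t => F (upd6 p i t)) (get6 p i) l) ->
  derivable_pt_lim (fun t => F (upd6 p i t)) (get6 p i) (pd6 i F p).
Proof. intro H. unfold pd6. apply epsilon_spec. exact H. Qed.

Lemma pd3_spec i F p :
  (exists l, derivable_pt_lim (fun t => F (upd3 p i t)) (get3 p i) l) ->
  derivable_pt_lim (fun t => F (upd3 p i t)) (get3 p i) (pd3 i F p).
Proof. intro H. unfold pd3. apply epsilon_spec. exact H. Qed.

Lemma iter_app l i F : iter_pd6 (l ++ i :: nil) F = iter_pd6 l (pd6 i F).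
Proof. unfold iter_pd6. rewrite fold_right_app. reflexivity. Qed.

Lemma smooth_pd U F i : smooth6_on U F -> smooth6_on U (pd6 i F).
Proof.
  intros H l p Up. specialize (H (l ++ i :: nil) p Up). rewrite iter_app in H. exact H.
Qed.

Lemma smooth_der U F p i : smooth6_on U F -> U p -> (i < 6)%nat ->
  derivable_pt_lim (fun t => F (upd6 p i t)) (get6 p i) (pd6 i F p).
Proof.
  intros H Up Hi. apply pd6_spec. destruct (H nil p Up) as [_ H2]. apply H2; auto.
Qed.

Lemma smooth_cont U F p : smooth6_on U F -> U p -> cont6_at F p.
Proof. intros H Up. exact (proj1 (H nil p Up)). Qed.

Lemma smooth3_der D F g i : smooth3_on D F -> D g -> (i < 3)%nat ->
  derivable_pt_lim (fun t => F (upd3 g i t)) (get3 g i) (pd3 i F g).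
Proof.
  intros H Dg Hi. apply pd3_spec. destruct (H nil g Dg) as [_ H2]. apply H2; auto.
Qed.

Ltac d6 a := destruct a as [|[|[|[|[|[|a]]]]]]; try lia.

Lemma U1 p a t : (a < 6)%nat -> get6 (upd6 p a t) a = t.
Proof. intros. destruct p as [[] []]. d6 a; reflexivity. Qed.
Lemma U2 p a b t : (a < 6)%nat -> (b < 6)%nat -> a <> b -> get6 (upd6 p a t) b = get6 p b.
Proof. intros. destruct p as [[] []]. d6 a; d6 b; try reflexivity; lia. Qed.
Lemma U3 p a t t' : (a < 6)%nat -> upd6 (upd6 p a t) a t' = upd6 p a t'.
Proof. intros. destruct p as [[] []]. d6 a; reflexivity. Qed.
Lemma U4 p a b t t' : (a < 6)%nat -> (b < 6)%nat -> a <> b ->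
  upd6 (upd6 p a t) b t' = upd6 (upd6 p b t') a t.
Proof. intros. destruct p as [[] []]. d6 a; d6 b; try reflexivity; lia. Qed.
Lemma U5 p a : (a < 6)%nat -> upd6 p a (get6 p a) = p.
Proof. intros. destruct p as [[] []]. d6 a; reflexivity. Qed.

Lemma der_eq f x l l' : derivable_pt_lim f x l -> l = l' -> derivable_pt_lim f x l'.
Proof. intros H E; subst; exact H. Qed.
Lemma der_fext f g x l : (forall t, f t = g t) -> derivable_pt_lim f x l -> derivable_pt_lim g x l.
Proof. intros E H. replace g with f; [exact H|]. apply functional_extensionality; exact E. Qed.
Lemma der_id x : derivable_pt_lim (fun t => t) x 1.
Proof. apply derivable_pt_lim_id. Qed.
Lemma der_const c x : derivable_pt_lim (fun _ => c) x 0.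
Proof. apply derivable_pt_lim_const. Qed.
Lemma der_plus f g x l1 l2 : derivable_pt_lim f x l1 -> derivable_pt_lim g x l2 ->
  derivable_pt_lim (fun t => f t + g t) x (l1 + l2).
Proof. intros; apply derivable_pt_lim_plus; auto. Qed.
Lemma der_minus f g x l1 l2 : derivable_pt_lim f x l1 -> derivable_pt_lim g x l2 ->
  derivable_pt_lim (fun t => f t - g t) x (l1 - l2).
Proof. intros; apply derivable_pt_lim_minus; auto. Qed.
Lemma der_opp f x l : derivable_pt_lim f x l -> derivable_pt_lim (fun t => - f t) x (- l).
Proof. intros; apply derivable_pt_lim_opp with (f := f); auto. Qed.
Lemma der_mult f g x l1 l2 : derivable_pt_lim f x l1 -> derivable_pt_lim g x l2 ->
  derivable_pt_lim (fun t => f t * g t) x (l1 * g x + f x * l2).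
Proof. intros; apply derivable_pt_lim_mult with (f1 := f) (f2 := g); auto. Qed.

Lemma der_sum (F : nat -> R -> R) (F' : nat -> R) x n :
  (forall i, (i <= n)%nat -> derivable_pt_lim (F i) x (F' i)) ->
  derivable_pt_lim (fun t => sum_f_R0 (fun i => F i t) n) x (sum_f_R0 F' n).
Proof.
  induction n as [|n IH]; intro H.
  - simpl. apply H; lia.
  - simpl. apply der_plus; [apply IH; intros; apply H; lia | apply H; lia].
Qed.

Lemma tri x y z : Rabs (x - z) <= Rabs (y - z) + Rabs (x - y).
Proof. replace (x - z) with ((y - z) + (x - y)) by ring. apply Rabs_triang. Qed.

Lemma dist6_upd q p i t : (i < 6)%nat ->
  dist6 (upd6 q i t) p <= dist6 q p + Rabs (t - get6 q i).
Proof.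
  intros Hi. destruct q as [[q1 q2 q3] [q4 q5 q6]]; destruct p as [[p1 p2 p3] [p4 p5 p6]].
  unfold dist6, dist3. d6 i; cbn;
  match goal with |- context [Rabs (t - ?y)] =>
    match goal with |- context [Rabs (y - ?z)] => pose proof (tri t y z) end end; lra.
Qed.

Lemma dist6_refl p : dist6 p p = 0.
Proof. unfold dist6, dist3. rewrite !Rminus_diag, Rabs_R0. ring. Qed.

Lemma dist6_2 p a b u v : (a < 6)%nat -> (b < 6)%nat -> a <> b ->
  dist6 (upd6 (upd6 p a u) b v) p <= Rabs (u - get6 p a) + Rabs (v - get6 p b).
Proof.
  intros Ha Hb Hab.
  pose proof (dist6_upd (upd6 p a u) p b v Hb).
  pose proof (dist6_upd p p a u Ha). rewrite dist6_refl in H0.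
  rewrite U2 in H by auto. lra.
Qed.

Definition Delta (F : V6 -> R) p a b s :=
  F (upd6 (upd6 p a (get6 p a + s)) b (get6 p b + s)) - F (upd6 p a (get6 p a + s))
  - F (upd6 p b (get6 p b + s)) + F p.

Lemma KL U F p a b r s : smooth6_on U F -> (a < 6)%nat -> (b < 6)%nat -> a <> b ->
  (forall q, dist6 q p < r -> U q) -> 0 < s -> 2 * s < r ->
  exists q, dist6 q p <= 2 * s /\ Delta F p a b s = s * (s * pd6 b (pd6 a F) q).
Proof.
  intros HF Ha Hb Hab HU Hs Hsr.
  set (xa := get6 p a). set (xb := get6 p b).
  assert (Hdist : forall u v, xa <= u <= xa + s -> xb <= v <= xb + s ->
     U (upd6 (upd6 p a u) b v)).
  { intros u v Hu Hv. apply HU. eapply Rle_lt_trans; [apply dist6_2; auto|].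
    unfold xa, xb in *. rewrite !Rabs_right by lra. lra. }
  set (phi := fun t => F (upd6 (upd6 p a t) b (xb + s)) - F (upd6 p a t)).
  set (phi' := fun t => pd6 a F (upd6 (upd6 p a t) b (xb + s)) - pd6 a F (upd6 p a t)).
  assert (Hphi : forall c, xa <= c <= xa + s -> derivable_pt_lim phi c (phi' c)).
  { intros c Hc. unfold phi, phi'. apply der_minus.
    - pose proof (smooth_der U F (upd6 (upd6 p a c) b (xb + s)) a HF) as H.
      rewrite U2, U1 in H by auto.
      apply (der_fext (fun t => F (upd6 (upd6 (upd6 p a c) b (xb + s)) a t))).
      + intro t. rewrite <- U4 by auto. rewrite U3 by auto. reflexivity.
      + apply H; auto. apply Hdist; unfold xb; lra.
    - pose proof (smooth_der U F (upd6 p a c) a HF) as H.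
      rewrite U1 in H by auto.
      apply (der_fext (fun t => F (upd6 (upd6 p a c) a t))).
      + intro t. rewrite U3 by auto. reflexivity.
      + apply H; auto.
        replace (upd6 p a c) with (upd6 (upd6 p a c) b xb).
        * apply Hdist; lra.
        * unfold xb. rewrite <- (U2 p a b c) by auto. apply U5; auto. }
  destruct (MVT_cor2 phi phi' xa (xa + s)) as [c [Hc1 Hc2]]; [lra|exact Hphi|].
  set (psi := fun y => pd6 a F (upd6 (upd6 p a c) b y)).
  set (psi' := fun y => pd6 b (pd6 a F) (upd6 (upd6 p a c) b y)).
  assert (Hpsi : forall d, xb <= d <= xb + s -> derivable_pt_lim psi d (psi' d)).
  { intros d Hd. unfold psi, psi'.
    pose proof (smooth_der U (pd6 a F) (upd6 (upd6 p a c) b d) b (smooth_pd U F a HF)) as H.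
    rewrite U1 in H by auto.
    apply (der_fext (fun t => pd6 a F (upd6 (upd6 (upd6 p a c) b d) b t))).
    + intro t. rewrite U3 by auto. reflexivity.
    + apply H; auto. apply Hdist; lra. }
  destruct (MVT_cor2 psi psi' xb (xb + s)) as [d [Hd1 Hd2]]; [lra|exact Hpsi|].
  exists (upd6 (upd6 p a c) b d). split.
  - eapply Rle_trans; [apply dist6_2; auto|].
    fold xa xb. rewrite !Rabs_right by lra. lra.
  - assert (E1 : Delta F p a b s = phi (xa + s) - phi xa).
    { unfold Delta, phi, xa, xb. rewrite (U5 p a) by auto. ring. }
    assert (E2 : phi' c = psi (xb + s) - psi xb).
    { unfold phi', psi.
      replace (upd6 (upd6 p a c) b xb) with (upd6 p a c); [reflexivity|].
      unfold xb. rewrite <- (U2 p a b c) by auto. symmetry; apply U5; auto. }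
    rewrite E1, Hc1, E2, Hd1. replace (xa + s - xa) with s by ring.
    replace (xb + s - xb) with s by ring. unfold psi'. ring.
Qed.

Lemma Delta_sym F p a b s : (a < 6)%nat -> (b < 6)%nat -> a <> b ->
  Delta F p a b s = Delta F p b a s.
Proof. intros. unfold Delta. rewrite U4 by auto. ring. Qed.

Lemma small0 x : (forall e, 0 < e -> Rabs x < e) -> x = 0.
Proof.
  intro H. destruct (Req_dec x 0) as [|Hx]; auto.
  assert (0 < Rabs x) by (apply Rabs_pos_lt; auto).
  specialize (H _ H0). lra.
Qed.

Lemma schwarz U F p a b r : smooth6_on U F -> U p -> (a < 6)%nat -> (b < 6)%nat ->
  0 < r -> (forall q, dist6 q p < r -> U q) ->
  pd6 a (pd6 b F) p = pd6 b (pd6 a F) p.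
Proof.
  intros HF Up Ha Hb Hr HU.
  destruct (Nat.eq_dec a b) as [->|Hab]; [reflexivity|].
  apply Rminus_diag_uniq. apply small0. intros e He.
  destruct (proj1 (HF (b :: a :: nil) p Up) (e/2)) as [d1 [Hd1 H1]]; [lra|].
  destruct (proj1 (HF (a :: b :: nil) p Up) (e/2)) as [d2 [Hd2 H2]]; [lra|].
  simpl in H1, H2.
  set (s := Rmin r (Rmin d1 d2) / 4).
  assert (Hs : 0 < s).
  { unfold s. apply Rmult_lt_0_compat; [|lra].
    apply Rmin_pos; auto. apply Rmin_pos; auto. }
  assert (Hs1 : 4 * s <= r) by (unfold s; pose proof (Rmin_l r (Rmin d1 d2)); lra).
  assert (Hs2 : 4 * s <= d1) by (unfold s; pose proof (Rmin_r r (Rmin d1 d2));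
     pose proof (Rmin_l d1 d2); lra).
  assert (Hs3 : 4 * s <= d2) by (unfold s; pose proof (Rmin_r r (Rmin d1 d2));
     pose proof (Rmin_r d1 d2); lra).
  destruct (KL U F p a b r s HF Ha Hb Hab HU Hs) as [q1 [Hq1 E1]]; [lra|].
  destruct (KL U F p b a r s HF Hb Ha (not_eq_sym Hab) HU Hs) as [q2 [Hq2 E2]]; [lra|].
  rewrite Delta_sym in E1 by auto. rewrite E1 in E2.
  assert (E : pd6 b (pd6 a F) q1 = pd6 a (pd6 b F) q2).
  { apply Rmult_eq_reg_l with s; [|lra]. apply Rmult_eq_reg_l with s; [|lra]. lra. }
  specialize (H1 q1 ltac:(lra)). specialize (H2 q2 ltac:(lra)).
  rewrite E in H1.
  replace (pd6 a (pd6 b F) p - pd6 b (pd6 a F) p) with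
    ((pd6 a (pd6 b F) q2 - pd6 b (pd6 a F) p) - (pd6 a (pd6 b F) q2 - pd6 a (pd6 b F) p)) by ring.
  apply Rabs_def2 in H1. apply Rabs_def2 in H2. apply Rabs_def1; lra.
Qed.

Definition dM (m k : nat) : R := if Nat.eqb k m then 1 else 0.
Definition dG (m k : nat) : R := if Nat.eqb k (m+3) then 1 else 0.
Definition dmu (F : V3 -> R) (g : V3) (k : nat) : R :=
  match k with 0 | 1 | 2 => 0 | S (S (S j)) => pd3 j F g end.

Definition dPi (mu : V3 -> V3) (p : V6) (k i j : nat) : R :=
  let g := snd p in
  let a1 := dM 0 k + dmu (fun x => c1 (mu x)) g k in
  let a2 := dM 1 k + dmu (fun x => c2 (mu x)) g k in
  let a3 := dM 2 k + dmu (fun x => c3 (mu x)) g k in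
  match i, j with
  | 0, 1 => - a3 | 0, 2 => a2 | 0, 4 => - dG 2 k | 0, 5 => dG 1 k
  | 1, 0 => a3 | 1, 2 => - a1 | 1, 3 => dG 2 k | 1, 5 => - dG 0 k
  | 2, 0 => - a2 | 2, 1 => a1 | 2, 3 => - dG 1 k | 2, 4 => dG 0 k
  | 3, 1 => - dG 2 k | 3, 2 => dG 1 k
  | 4, 0 => dG 2 k | 4, 2 => - dG 0 k
  | 5, 0 => - dG 1 k | 5, 1 => dG 0 k
  | _, _ => 0
  end.

Definition bilS (P : nat -> nat -> R) (X Y : nat -> R) : R :=
  X 0%nat * P 0%nat 1%nat * Y 1%nat + X 0%nat * P 0%nat 2%nat * Y 2%nat
+ X 0%nat * P 0%nat 4%nat * Y 4%nat + X 0%nat * P 0%nat 5%nat * Y 5%nat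
+ X 1%nat * P 1%nat 0%nat * Y 0%nat + X 1%nat * P 1%nat 2%nat * Y 2%nat
+ X 1%nat * P 1%nat 3%nat * Y 3%nat + X 1%nat * P 1%nat 5%nat * Y 5%nat
+ X 2%nat * P 2%nat 0%nat * Y 0%nat + X 2%nat * P 2%nat 1%nat * Y 1%nat
+ X 2%nat * P 2%nat 3%nat * Y 3%nat + X 2%nat * P 2%nat 4%nat * Y 4%nat
+ X 3%nat * P 3%nat 1%nat * Y 1%nat + X 3%nat * P 3%nat 2%nat * Y 2%nat
+ X 4%nat * P 4%nat 0%nat * Y 0%nat + X 4%nat * P 4%nat 2%nat * Y 2%nat
+ X 5%nat * P 5%nat 0%nat * Y 0%nat + X 5%nat * P 5%nat 1%nat * Y 1%nat.

Definition DB mu p (G1 H1 : nat -> R) (G2 H2 : nat -> nat -> R) (l : nat) : R :=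
  bilS (Pi mu p) (fun i => G2 (Nat.min l i) (Nat.max l i)) H1
  + bilS (dPi mu p l) G1 H1
  + bilS (Pi mu p) G1 (fun j => H2 (Nat.min l j) (Nat.max l j)).

Definition JJ mu p F1 G1 H1 F2 G2 H2 : R :=
  bilS (Pi mu p) F1 (DB mu p G1 H1 G2 H2)
+ bilS (Pi mu p) G1 (DB mu p H1 F1 H2 F2)
+ bilS (Pi mu p) H1 (DB mu p F1 G1 F2 G2).

Definition det3 (F1 G1 H1 : nat -> R) :=
  F1 0%nat * (G1 1%nat * H1 2%nat - G1 2%nat * H1 1%nat)
  - F1 1%nat * (G1 0%nat * H1 2%nat - G1 2%nat * H1 0%nat)
  + F1 2%nat * (G1 0%nat * H1 1%nat - G1 1%nat * H1 0%nat).
Lemma JJ_eq mu p F1 G1 H1 F2 G2 H2 :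
  JJ mu p F1 G1 H1 F2 G2 H2 = - dot3 (snd p) (curl3 mu (snd p)) * det3 F1 G1 H1.
Proof.
  unfold JJ, DB, dot3, curl3, det3.
  cbv beta iota zeta delta [bilS Pi dPi dM dG dmu Nat.min Nat.max Nat.eqb Nat.add].
  cbn [Defs.c1 Defs.c2 Defs.c3].
  Time ring.
Qed.

Section X.
End X.

Lemma LA1 D mu p k : smoothV3_on D mu -> D (snd p) -> (k < 6)%nat ->
  derivable_pt_lim (fun t => c1 (fst (upd6 p k t)) + c1 (mu (snd (upd6 p k t)))) (get6 p k)
    (dM 0 k + dmu (fun x => c1 (mu x)) (snd p) k).
Proof.
  intros [H1 [H2 H3]] Dp Hk. d6 k; cbn;
  (eapply der_eq; [apply der_plus; [first [apply der_id | apply der_const] |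
     first [apply der_const | first [apply (smooth3_der D (fun x => c1 (mu x)) (snd p) 0) | apply (smooth3_der D (fun x => c1 (mu x)) (snd p) 1) | apply (smooth3_der D (fun x => c1 (mu x)) (snd p) 2)]; auto]] | ring]).
Qed.
Lemma LA2 D mu p k : smoothV3_on D mu -> D (snd p) -> (k < 6)%nat ->
  derivable_pt_lim (fun t => c2 (fst (upd6 p k t)) + c2 (mu (snd (upd6 p k t)))) (get6 p k)
    (dM 1 k + dmu (fun x => c2 (mu x)) (snd p) k).
Proof.
  intros [H1 [H2 H3]] Dp Hk. d6 k; cbn;
  (eapply der_eq; [apply der_plus; [first [apply der_id | apply der_const] |
     first [apply der_const | first [apply (smooth3_der D (fun x => c2 (mu x)) (snd p) 0) | apply (smooth3_der D (fun x => c2 (mu x)) (snd p) 1) | apply (smooth3_der D (fun x => c2 (mu x)) (snd p) 2)]; auto]] | ring]).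
Qed.
Lemma LA3 D mu p k : smoothV3_on D mu -> D (snd p) -> (k < 6)%nat ->
  derivable_pt_lim (fun t => c3 (fst (upd6 p k t)) + c3 (mu (snd (upd6 p k t)))) (get6 p k)
    (dM 2 k + dmu (fun x => c3 (mu x)) (snd p) k).
Proof.
  intros [H1 [H2 H3]] Dp Hk. d6 k; cbn;
  (eapply der_eq; [apply der_plus; [first [apply der_id | apply der_const] |
     first [apply der_const | first [apply (smooth3_der D (fun x => c3 (mu x)) (snd p) 0) | apply (smooth3_der D (fun x => c3 (mu x)) (snd p) 1) | apply (smooth3_der D (fun x => c3 (mu x)) (snd p) 2)]; auto]] | ring]).
Qed.
Lemma LG1 p k : (k < 6)%nat ->
  derivable_pt_lim (fun t => c1 (snd (upd6 p k t))) (get6 p k) (dG 0 k).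
Proof. intros Hk. d6 k; cbn; first [apply der_id | apply der_const]. Qed.
Lemma LG2 p k : (k < 6)%nat ->
  derivable_pt_lim (fun t => c2 (snd (upd6 p k t))) (get6 p k) (dG 1 k).
Proof. intros Hk. d6 k; cbn; first [apply der_id | apply der_const]. Qed.
Lemma LG3 p k : (k < 6)%nat ->
  derivable_pt_lim (fun t => c3 (snd (upd6 p k t))) (get6 p k) (dG 2 k).
Proof. intros Hk. d6 k; cbn; first [apply der_id | apply der_const]. Qed.

Lemma dPi_lim D mu p k i j : smoothV3_on D mu -> D (snd p) -> (k < 6)%nat ->
  derivable_pt_lim (fun t => Pi mu (upd6 p k t) i j) (get6 p k) (dPi mu p k i j).
Proof.
  intros Hmu Dp Hk. unfold Pi, dPi.
  destruct i as [|[|[|[|[|[|i]]]]]]; destruct j as [|[|[|[|[|[|j]]]]]];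
  cbv beta zeta iota;
  first [ apply der_const
        | apply der_opp; first [apply (LA1 D) | apply (LA2 D) | apply (LA3 D) | apply LG1 | apply LG2 | apply LG3]; auto
        | first [apply (LA1 D) | apply (LA2 D) | apply (LA3 D) | apply LG1 | apply LG2 | apply LG3]; auto ].
Qed.

Lemma bil_Pi mu p X Y :
  sum_f_R0 (fun i => sum_f_R0 (fun j => X i * Pi mu p i j * Y j) 5) 5 = bilS (Pi mu p) X Y.
Proof. cbv beta iota zeta delta [sum_f_R0 bilS Pi]. ring. Qed.

Lemma bracket_bil mu f g p :
  bracket mu f g p = bilS (Pi mu p) (fun i => pd6 i f p) (fun j => pd6 j g p).
Proof. unfold bracket. apply bil_Pi. Qed.

Lemma der_bracket D mu g h p k :
  smooth6_on (fun q => D (snd q)) g -> smooth6_on (fun q => D (snd q)) h ->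
  smoothV3_on D mu -> D (snd p) -> (k < 6)%nat ->
  pd6 k (bracket mu g h) p =
    bilS (Pi mu p) (fun i => pd6 k (pd6 i g) p) (fun j => pd6 j h p)
  + bilS (dPi mu p k) (fun i => pd6 i g p) (fun j => pd6 j h p)
  + bilS (Pi mu p) (fun i => pd6 i g p) (fun j => pd6 k (pd6 j h) p).
Proof.
  intros Hg Hh Hmu Dp Hk. apply pd6_eq. unfold bracket.
  eapply der_eq.
  - apply (der_sum (fun i t => sum_f_R0 (fun j => pd6 i g (upd6 p k t) * Pi mu (upd6 p k t) i j * pd6 j h (upd6 p k t)) 5)).
    intros i Hi.
    apply (der_sum (fun j t => pd6 i g (upd6 p k t) * Pi mu (upd6 p k t) i j * pd6 j h (upd6 p k t))).
    intros j Hj.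
    apply der_mult; [apply der_mult|].
    + apply (smooth_der (fun q => D (snd q)) (pd6 i g)); auto. apply smooth_pd; auto.
    + apply (dPi_lim D); auto.
    + apply (smooth_der (fun q => D (snd q)) (pd6 j h)); auto. apply smooth_pd; auto.
  - cbv beta iota zeta delta [sum_f_R0 bilS Pi dPi]. rewrite !(U5 p k Hk). ring.
Qed.

Lemma open_U D p : open3 D -> D (snd p) ->
  exists r, 0 < r /\ forall q, dist6 q p < r -> D (snd q).
Proof.
  intros HD Dp. destruct (HD _ Dp) as [r [Hr H]]. exists r; split; auto.
  intros q Hq. apply H. unfold dist6, dist3 in *.
  pose proof (Rabs_pos (c1 (fst q) - c1 (fst p))).
  pose proof (Rabs_pos (c2 (fst q) - c2 (fst p))).
  pose proof (Rabs_pos (c3 (fst q) - c3 (fst p))). lra.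
Qed.

Lemma sym2 D g p k i : open3 D -> smooth6_on (fun q => D (snd q)) g -> D (snd p) ->
  (k < 6)%nat -> (i < 6)%nat ->
  pd6 k (pd6 i g) p = pd6 (Nat.min k i) (pd6 (Nat.max k i) g) p.
Proof.
  intros HD Hg Dp Hk Hi. destruct (Compare_dec.le_lt_dec k i) as [L|L].
  - rewrite Nat.min_l, Nat.max_r by lia. reflexivity.
  - rewrite Nat.min_r, Nat.max_l by lia.
    destruct (open_U D p HD Dp) as [r [Hr HU]].
    apply (schwarz (fun q => D (snd q)) g p k i r); auto.
Qed.

Lemma bilS_ext P X X' Y Y' : (forall i, (i < 6)%nat -> X i = X' i) ->
  (forall j, (j < 6)%nat -> Y j = Y' j) -> bilS P X Y = bilS P X' Y'.
Proof.
  intros HX HY. unfold bilS. repeat (rewrite HX by lia). repeat (rewrite HY by lia).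
  reflexivity.
Qed.

Definition pdv (g : V6 -> R) p := fun i => pd6 i g p.
Definition S2 (g : V6 -> R) p := fun a b => pd6 a (pd6 b g) p.

Lemma der_bracket2 D mu g h p l : open3 D ->
  smooth6_on (fun q => D (snd q)) g -> smooth6_on (fun q => D (snd q)) h ->
  smoothV3_on D mu -> D (snd p) -> (l < 6)%nat ->
  pd6 l (bracket mu g h) p = DB mu p (pdv g p) (pdv h p) (S2 g p) (S2 h p) l.
Proof.
  intros HD Hg Hh Hmu Dp Hl. rewrite (der_bracket D) by auto. unfold DB.
  f_equal; [f_equal|].
  - apply bilS_ext; intros; auto. unfold S2. apply (sym2 D); auto.
  - apply bilS_ext; intros; auto. unfold S2. apply (sym2 D); auto.
Qed.

Lemma jacobi D mu f g h p : open3 D -> smoothV3_on D mu ->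
  smooth6_on (fun q => D (snd q)) f -> smooth6_on (fun q => D (snd q)) g ->
  smooth6_on (fun q => D (snd q)) h -> D (snd p) ->
  bracket mu f (bracket mu g h) p + bracket mu g (bracket mu h f) p
      + bracket mu h (bracket mu f g) p
  = - dot3 (snd p) (curl3 mu (snd p)) * det3 (pdv f p) (pdv g p) (pdv h p).
Proof.
  intros HD Hmu Hf Hg Hh Dp. rewrite <- (JJ_eq mu p (pdv f p) (pdv g p) (pdv h p) (S2 f p) (S2 g p) (S2 h p)). unfold JJ.
  rewrite !bracket_bil.
  f_equal; [f_equal|]; apply bilS_ext; intros; auto; apply (der_bracket2 D); auto.
Qed.

Lemma pd6_const i c : pd6 i (fun _ => c) = fun _ => 0.
Proof. apply functional_extensionality; intro q. apply pd6_eq. apply der_const. Qed.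

Lemma smooth_lin U F (c : nat -> R) :
  (forall i q, derivable_pt_lim (fun t => F (upd6 q i t)) (get6 q i) (c i)) ->
  (forall p, cont6_at F p) -> smooth6_on U F.
Proof.
  intros Hd Hc.
  assert (Hp : forall i, pd6 i F = fun _ => c i).
  { intro i. apply functional_extensionality; intro q. apply pd6_eq. apply Hd. }
  assert (Hi : forall l i, exists c0, iter_pd6 (i :: l) F = fun _ => c0).
  { induction l as [|j l IH]; intro i.
    - exists (c i). simpl. apply Hp.
    - destruct (IH j) as [c0 E]. exists 0. change (pd6 i (iter_pd6 (j :: l) F) = fun _ => 0).
      rewrite E. apply pd6_const. }
  intros l p Up. destruct l as [|i l].
  - split; [apply Hc|]. intros i _. exists (c i). apply Hd.
  - destruct (Hi l i) as [c0 E]. rewrite E. split.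
    + intros e He. exists 1. split; [lra|]. intros. rewrite Rminus_diag, Rabs_R0; lra.
    + intros. exists 0. apply der_const.
Qed.

Lemma coord_cont (sel : V6 -> R) p :
  (forall q, Rabs (sel q - sel p) <= dist6 q p) -> cont6_at sel p.
Proof.
  intros H e He. exists e. split; auto. intros q Hq. specialize (H q). lra.
Qed.

Ltac cc p := let q := fresh "q" in intro q; destruct q as [[? ? ?] [? ? ?]];
  destruct p as [[? ? ?] [? ? ?]]; unfold dist6, dist3; cbn;
  repeat (match goal with |- context [Rabs ?x] =>
     let H := fresh in assert (H := Rabs_pos x); revert H; generalize (Rabs x); intros end);
  lra.

Definition f1 (q : V6) := c1 (fst q).
Definition f2 (q : V6) := c2 (fst q).
Definition f3 (q : V6) := c3 (fst q).

Lemma f1_smooth U : smooth6_on U f1.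
Proof.
  apply (smooth_lin U f1 (fun i => match i with 0 => 1 | _ => 0 end)).
  - intros i q. unfold f1. destruct i as [|[|[|[|[|[|i]]]]]]; cbn; first [apply der_id | apply der_const].
  - intro p. apply coord_cont. cc p.
Qed.
Lemma f2_smooth U : smooth6_on U f2.
Proof.
  apply (smooth_lin U f2 (fun i => match i with 1 => 1 | _ => 0 end)).
  - intros i q. unfold f2. destruct i as [|[|[|[|[|[|i]]]]]]; cbn; first [apply der_id | apply der_const].
  - intro p. apply coord_cont. cc p.
Qed.
Lemma f3_smooth U : smooth6_on U f3.
Proof.
  apply (smooth_lin U f3 (fun i => match i with 2 => 1 | _ => 0 end)).
  - intros i q. unfold f3. destruct i as [|[|[|[|[|[|i]]]]]]; cbn; first [apply der_id | apply der_const].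
  - intro p. apply coord_cont. cc p.
Qed.

Lemma pdf (F : V6 -> R) i p c : derivable_pt_lim (fun t => F (upd6 p i t)) (get6 p i) c -> pd6 i F p = c.
Proof. apply pd6_eq. Qed.

Lemma det_coord p : det3 (pdv f1 p) (pdv f2 p) (pdv f3 p) = 1.
Proof.
  unfold det3, pdv.
  repeat match goal with |- context [pd6 ?i ?F p] =>
    let c := fresh in evar (c : R);
    rewrite (pdf F i p c) by (unfold F, c; cbn; first [apply der_id | apply der_const]);
    unfold c; clear c end.
  ring.
Qed.

Lemma div_eq D mu g : smoothV3_on D mu -> D g ->
  div3 (fun x => cross3 x (mu x)) g = - dot3 g (curl3 mu g).
Proof.
  intros [H1 [H2 H3]] Dg. unfold div3, dot3, curl3. cbn [Defs.c1 Defs.c2 Defs.c3].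
  rewrite (pd3_eq 0 _ g (c2 g * pd3 0 (fun x => c3 (mu x)) g - c3 g * pd3 0 (fun x => c2 (mu x)) g)).
  rewrite (pd3_eq 1 _ g (c3 g * pd3 1 (fun x => c1 (mu x)) g - c1 g * pd3 1 (fun x => c3 (mu x)) g)).
  rewrite (pd3_eq 2 _ g (c1 g * pd3 2 (fun x => c2 (mu x)) g - c2 g * pd3 2 (fun x => c1 (mu x)) g)).
  - ring.
  - cbn. apply der_minus.
    + eapply der_eq; [apply der_mult; [apply der_const | apply (smooth3_der D (fun x => c2 (mu x)) g 2); auto]|]. cbn; ring.
    + eapply der_eq; [apply der_mult; [apply der_const | apply (smooth3_der D (fun x => c1 (mu x)) g 2); auto]|]. cbn; ring.
  - cbn. apply der_minus.
    + eapply der_eq; [apply der_mult; [apply der_const | apply (smooth3_der D (fun x => c1 (mu x)) g 1); auto]|]. cbn; ring.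
    + eapply der_eq; [apply der_mult; [apply der_const | apply (smooth3_der D (fun x => c3 (mu x)) g 1); auto]|]. cbn; ring.
  - cbn. apply der_minus.
    + eapply der_eq; [apply der_mult; [apply der_const | apply (smooth3_der D (fun x => c3 (mu x)) g 0); auto]|]. cbn; ring.
    + eapply der_eq; [apply der_mult; [apply der_const | apply (smooth3_der D (fun x => c2 (mu x)) g 0); auto]|]. cbn; ring.
Qed.

Theorem mainTheorem5 (D : V3 -> Prop) (mu : V3 -> V3) :
  open3 D ->
  (forall g, D g -> g <> mkV3 0 0 0) ->
  smoothV3_on D mu ->
  (defines_Poisson mu (fun p : V6 => D (snd p)) <->
     (forall g, D g -> dot3 g (curl3 mu g) = 0)) /\
  ((forall g, D g -> dot3 g (curl3 mu g) = 0) <->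
     (forall g, D g -> div3 (fun x => cross3 x (mu x)) g = 0)).
Proof.
  intros HD _ Hmu. split; split.
  - intros HP g Dg.
    specialize (HP f1 f2 f3 (f1_smooth _) (f2_smooth _) (f3_smooth _) (mkV3 0 0 0, g) Dg).
    rewrite (jacobi D) in HP; auto using f1_smooth, f2_smooth, f3_smooth.
    rewrite det_coord in HP. cbn [snd] in HP. lra.
  - intros Hc f g h Hf Hg Hh p Dp. rewrite (jacobi D) by auto. rewrite Hc by auto. ring.
  - intros Hc g Dg. rewrite (div_eq D) by auto. rewrite Hc by auto. ring.
  - intros Hc g Dg. specialize (Hc g Dg). rewrite (div_eq D) in Hc by auto. lra.
Qed.
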